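(* Assume: (A1) $f(x,y)$ and each component of $g(x,y)$ are convex in $y$ for each fixed $x$, and $f,g$ are twice continuously differentiable; (A2) $Y\subseteq\mathbb{R}^m$ is a compact convex set with $\{y:\exists x\in X \text{ such that } g(x,y)\le 0\}\subseteq\mathrm{int}(Y)$; (R1) for each $x\in X$ there exists $y$ with $g(x,y)<0$. Then for each fixed $(\lambda,x)$, the function $\mu\mapsto -h_\mu(\lambda,x)$ is decreasing on $\mu\ge0$, and the functions $-h_\mu$ epi-converge to $-h$ as $\mu\to0$ (with $\mu>0$).
   Context: Let $f:\mathbb{R}^n\times\mathbb{R}^m\to\mathbb{R}$, $g:\mathbb{R}^n\times\mathbb{R}^m\to\mathbb{R}^p$, $G:\mathbb{R}^n\to\mathbb{R}^q$; vector inequalities componentwise; $X=\{x:G(x)\le0\}$. $h(\lambda,x)=\min_y\{f(x,y)+\lambda^{\mathsf T}g(x,y):y\in Y\}$ and, for $\mu\ge0$, $h_\mu(\lambda,x)=\min_y\{\mu\|y\|^2+f(x,y)+\lambda^{\mathsf T}g(x,y):y\in Y\}$ (so $h_0=h$), with $Y$ from (A2). Functions $\phi_\mu$ epi-converge to $\phi$ as $\mu\to0$ if their epigraphs converge to the epigraph of $\phi$ in the Painlevé–Kuratowski sense; equivalently, for every $z$, $\liminf\phi_\mu(z^\mu)\ge\phi(z)$ for all $z^\mu\to z$, and $\limsup\phi_\mu(z^\mu)\le\phi(z)$ for some $z^\mu\to z$. *)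

(* Defs.v *)
From HB Require Import structures.
From mathcomp Require Import all_boot all_order all_algebra.
From mathcomp Require Import all_classical all_reals all_analysis.
Set Implicit Arguments. Unset Strict Implicit. Unset Printing Implicit Defensive.
Import Order.TTheory GRing.Theory Num.Theory.
Import numFieldNormedType.Exports.
Local Open Scope classical_set_scope.
Local Open Scope ring_scope.

Section Defs.
Variable R : realType.

Definition sqnorm (m : nat) (y : 'rV[R]_m) : R := \sum_(i < m) (y 0 i) ^+ 2.

Definition dotp (p : nat) (u v : 'rV[R]_p) : R := \sum_(i < p) u 0 i * v 0 i.

Definition vle0 (p : nat) (v : 'rV[R]_p) : Prop := forall i : 'I_p, v 0 i <= 0.
Definition vlt0 (p : nat) (v : 'rV[R]_p) : Prop := forall i : 'I_p, v 0 i < 0.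

Definition convex_fun (m : nat) (F : 'rV[R]_m -> R) : Prop :=
  forall (y1 y2 : 'rV[R]_m) (t : R), 0 <= t -> t <= 1 ->
    F ((1 - t) *: y1 + t *: y2) <= (1 - t) * F y1 + t * F y2.

Definition convex_set_ (m : nat) (Y : set 'rV[R]_m) : Prop :=
  forall (y1 y2 : 'rV[R]_m) (t : R), Y y1 -> Y y2 -> 0 <= t -> t <= 1 ->
    Y ((1 - t) *: y1 + t *: y2).

(* twice continuously differentiable on the whole normed space V:
   f differentiable everywhere, each directional derivative 'D_v f
   differentiable everywhere, and every second directional derivative
   'D_w ('D_v f) continuous.  (Equivalent to f being C^2.) *)
Definition C2 (V : normedModType R) (F : V -> R) : Prop :=
  [/\ forall z, differentiable F z,
      forall (v : V) z, differentiable (fun u => 'D_v F u) z &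
      forall v w : V, continuous (fun u => 'D_w (fun u' => 'D_v F u') u)].

Definition Xset (n q : nat) (G : 'rV[R]_n -> 'rV[R]_q) : set 'rV[R]_n :=
  [set x | vle0 (G x)].

(* h_mu(lambda,x) = min_{y in Y} mu ||y||^2 + f(x,y) + lambda^T g(x,y);
   the minimum (attained, Y compact, integrand continuous) is written as
   the infimum of the set of values. *)
Definition hmu (n m p : nat) (f : 'rV[R]_n -> 'rV[R]_m -> R)
  (g : 'rV[R]_n -> 'rV[R]_m -> 'rV[R]_p) (Y : set 'rV[R]_m)
  (mu : R) (lx : 'rV[R]_p * 'rV[R]_n) : R :=
  inf [set mu * sqnorm y + f lx.2 y + dotp lx.1 (g lx.2 y) | y in Y].

Definition h (n m p : nat) (f : 'rV[R]_n -> 'rV[R]_m -> R)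
  (g : 'rV[R]_n -> 'rV[R]_m -> 'rV[R]_p) (Y : set 'rV[R]_m)
  (lx : 'rV[R]_p * 'rV[R]_n) : R :=
  inf [set f lx.2 y + dotp lx.1 (g lx.2 y) | y in Y].

(* epi-convergence of phi_mu to phi as mu -> 0 (mu > 0), via the sequential
   characterization: liminf phi_mu(z_mu) >= phi(z) for all z_mu -> z, and
   limsup phi_mu(z_mu) <= phi(z) for some z_mu -> z.  Since all functions are
   real valued, liminf/limsup bounds are written with epsilons. *)
Definition epi_converges_at0 (T : topologicalType) (phi : R -> T -> R)
  (phi0 : T -> R) : Prop :=
  forall z : T,
    (forall zmu : R -> T, zmu mu @[mu --> 0^'+] --> z ->
       forall e : R, 0 < e -> \forall mu \near 0^'+, phi0 z - e <= phi mu (zmu mu))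
 /\ (exists zmu : R -> T, zmu mu @[mu --> 0^'+] --> z /\
       forall e : R, 0 < e -> \forall mu \near 0^'+, phi mu (zmu mu) <= phi0 z + e).

End Defs.

(* Main.v *)
Require Import Defs.
From HB Require Import structures.
From mathcomp Require Import all_boot all_order all_algebra.
From mathcomp Require Import all_classical all_reals all_analysis.
Import Order.TTheory GRing.Theory Num.Theory.
Import numFieldNormedType.Exports.
Local Open Scope classical_set_scope.
Local Open Scope ring_scope.

Lemma Phi_cont (R : realType) (n m p : nat)
  (f : 'rV[R]_n -> 'rV[R]_m -> R) (g : 'rV[R]_n -> 'rV[R]_m -> 'rV[R]_p)
  (Hfc : continuous (fun z : 'rV[R]_n * 'rV[R]_m => f z.1 z.2))
  (Hgc : forall i, continuous (fun z : 'rV[R]_n * 'rV[R]_m => g z.1 z.2 0 i)) :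
  continuous (fun w : ('rV[R]_p * 'rV[R]_n) * 'rV[R]_m =>
     f w.1.2 w.2 + dotp w.1.1 (g w.1.2 w.2)).
Proof.
have Hpr : continuous (fun w : ('rV[R]_p * 'rV[R]_n) * 'rV[R]_m => (w.1.2, w.2)).
  move=> w.
  have h1 : (fun w : ('rV[R]_p * 'rV[R]_n) * 'rV[R]_m => w.1.2) @ w --> w.1.2.
    apply: (cvg_comp (fun w : ('rV[R]_p * 'rV[R]_n) * 'rV[R]_m => w.1) snd).
      exact: cvg_fst.
    exact: cvg_snd.
  have h2 : (fun w : ('rV[R]_p * 'rV[R]_n) * 'rV[R]_m => w.2) @ w --> w.2.
    exact: cvg_snd.
  exact: (cvg_pair h1 h2).
move=> w; apply: cvgD.
  exact: (continuous_comp (Hpr w) (Hfc _)).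
rewrite /dotp; apply: cvg_big => [|i _]; first exact: add_continuous.
apply: cvgM.
  apply: (cvg_comp (fun w : ('rV[R]_p * 'rV[R]_n) * 'rV[R]_m => w.1.1) (fun l => l 0 i)).
    apply: (cvg_comp (fun w : ('rV[R]_p * 'rV[R]_n) * 'rV[R]_m => w.1) fst).
      exact: cvg_fst.
    exact: cvg_fst.
  exact: coord_continuous.
exact: (continuous_comp (Hpr w) (Hgc i _)).
Qed.

From mathcomp Require Import lra.

Theorem proposition2 (R : realType) (n m p q : nat)
  (f : 'rV[R]_n -> 'rV[R]_m -> R) (g : 'rV[R]_n -> 'rV[R]_m -> 'rV[R]_p)
  (G : 'rV[R]_n -> 'rV[R]_q) (Y : set 'rV[R]_m)
  (* (A1) *)
  (Hfconv : forall x, convex_fun (f x))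
  (Hgconv : forall x (i : 'I_p), convex_fun (fun y => g x y 0 i))
  (HfC2 : C2 (fun z : 'rV[R]_n * 'rV[R]_m => f z.1 z.2))
  (HgC2 : forall i : 'I_p, C2 (fun z : 'rV[R]_n * 'rV[R]_m => g z.1 z.2 0 i))
  (* (A2) *)
  (HYcpt : compact Y) (HYconv : convex_set_ Y)
  (HYint : [set y | exists2 x, Xset G x & vle0 (g x y)] `<=` interior Y)
  (* (R1) *)
  (HR1 : forall x, Xset G x -> exists y, vlt0 (g x y)) :
  (forall (lx : 'rV[R]_p * 'rV[R]_n) (mu1 mu2 : R), 0 <= mu1 -> mu1 <= mu2 ->
      - hmu f g Y mu2 lx <= - hmu f g Y mu1 lx)
  /\ epi_converges_at0 (fun mu lx => - hmu f g Y mu lx) (fun lx => - h f g Y lx).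
Proof.
have Hfc : continuous (fun z : 'rV[R]_n * 'rV[R]_m => f z.1 z.2).
  case: HfC2 => Hd _ _ z; exact: differentiable_continuous (Hd z).
have Hgc : forall i, continuous (fun z : 'rV[R]_n * 'rV[R]_m => g z.1 z.2 0 i).
  move=> i; case: (HgC2 i) => Hd _ _ z; exact: differentiable_continuous (Hd z).
have PhiC := @Phi_cont R n m p f g Hfc Hgc.
set Phi := fun (lx : 'rV[R]_p * 'rV[R]_n) y => f lx.2 y + dotp lx.1 (g lx.2 y).
have Cy : forall lx, continuous (Phi lx).
  move=> lx y.
  have hp : (fun y : 'rV[R]_m => (lx, y)) @ y --> (lx, y).
    have c1 : (fun _ : 'rV[R]_m => lx) @ y --> lx by exact: (@cst_continuous _ _ lx y).
    have c2 : (fun y0 : 'rV[R]_m => y0) @ y --> y by exact: cvg_id.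
    exact: (cvg_pair c1 c2).
  exact: (continuous_comp hp (PhiC _)).
have Clx : forall y, continuous (Phi^~ y).
  move=> y lx.
  have hp : (fun lx : 'rV[R]_p * 'rV[R]_n => (lx, y)) @ lx --> (lx, y).
    have c1 : (fun _ : 'rV[R]_p * 'rV[R]_n => y) @ lx --> y by exact: (@cst_continuous _ _ y lx).
    have c2 : (fun l : 'rV[R]_p * 'rV[R]_n => l) @ lx --> lx by exact: cvg_id.
    exact: (cvg_pair c2 c1).
  exact: (continuous_comp hp (PhiC _)).
have Hlb : forall lx, exists B, forall y, Y y -> - B <= Phi lx y.
  move=> lx.
  have cpt := continuous_compact (@continuous_subspaceT _ _ Y _ (Cy lx)) HYcpt.
  case: (compact_bounded cpt) => M [_ /(_ (`|M| + 1))].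
  rewrite (le_lt_trans (ler_norm _)) ?ltrDl// => /(_ erefl) HM.
  exists (`|M| + 1) => y Yy.
  have := HM (Phi lx y) (ex_intro2 _ _ y Yy erefl).
  by rewrite /= ler_norml => /andP[].
have Hsq : forall y : 'rV[R]_m, 0 <= sqnorm y.
  by move=> y; apply: sumr_ge0 => i _; exact: sqr_ge0.
have Hle : forall mu lx y, 0 <= mu -> Y y ->
    hmu f g Y mu lx <= mu * sqnorm y + Phi lx y.
  move=> mu lx y mu0 Yy; case: (Hlb lx) => B HB.
  rewrite /hmu /Phi addrA; apply: ge_inf; last by exists y.
  exists (- B) => _ [z Yz <-].
  rewrite -addrA; apply: le_trans (HB z Yz) _.
  by rewrite lerDr mulr_ge0.
have Yempty : ~ (Y !=set0) -> forall mu lx, hmu f g Y mu lx = h f g Y lx.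
  move=> HY mu lx.
  have Y0 : Y = set0.
    by apply/eqP; apply/negPn/negP => /set0P.
  by rewrite /hmu /h Y0 !image_set0.
have Hmono : forall (lx : 'rV[R]_p * 'rV[R]_n) (mu1 mu2 : R), 0 <= mu1 -> mu1 <= mu2 ->
      hmu f g Y mu1 lx <= hmu f g Y mu2 lx.
  move=> lx mu1 mu2 mu10 mu12.
  case: (pselect (Y !=set0)) => HY; last by rewrite !Yempty.
  case: HY => y0 Yy0.
  apply: lb_le_inf; first by exists (mu2 * sqnorm y0 + f lx.2 y0 + dotp lx.1 (g lx.2 y0)); exists y0.
  move=> _ [y Yy <-].
  apply: le_trans (Hle _ _ _ mu10 Yy) _.
  rewrite /Phi addrA lerD2r lerD2r ler_wpM2r//.
have h0 : forall lx, hmu f g Y 0 lx = h f g Y lx.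
  move=> lx; rewrite /hmu /h; congr inf; apply: eq_imagel => y _.
  by rewrite mul0r add0r.
split.
  by move=> lx mu1 mu2 ? ?; rewrite lerN2; apply: Hmono.
move=> z; split.
  move=> zmu Hz e e0.
  case: (pselect (Y !=set0)) => HY; last first.
    have Y0 : Y = set0 by apply/eqP; apply/negPn/negP => /set0P.
    apply: filterE => mu; rewrite /= /hmu /h Y0 !image_set0; lra.
  have hinf : has_inf [set f z.2 y + dotp z.1 (g z.2 y) | y in Y].
    split; first by case: HY => y Yy; exists (f z.2 y + dotp z.1 (g z.2 y)); exists y.
    case: (Hlb z) => B HB; exists (- B) => _ [y Yy <-]; exact: HB.
  have [_ [y0 Yy0 <-] Hv] := @inf_adherent R _ (e / 2) (divr_gt0 e0 (ltr0Sn _ 1)) hinf.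
  have Hk : (fun mu => mu * sqnorm y0 + Phi (zmu mu) y0) @ 0^'+ --> Phi z y0.
    rewrite -[X in _ --> X]add0r -[X in _ --> X + _](mul0r (sqnorm y0)).
    apply: cvgD.
      apply: cvgM; last exact: cvg_cst.
      exact: (cvg_at_right_filter cvg_id).
    exact: (cvg_comp _ _ Hz (Clx y0 z)).
  have := @cvgr_lt _ _ _ _ _ _ Hk (Phi z y0 + e / 2).
  have FF : Filter ((0:R)^'+) by exact: _.
  rewrite ltrDl divr_gt0 // => /(_ FF isT) Hev.
  apply: (@filterS2 _ _ FF _ _ _ _ Hev (nbhs_right_gt 0)) => mu Hmu mu0.
  have := Hle mu (zmu mu) y0 (ltW mu0) Yy0.
  rewrite /h /Phi in Hv Hmu *.
  lra.
exists (fun _ => z); split; first exact: cvg_cst.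
move=> e e0.
apply: (filterS _ (nbhs_right_gt 0)) => mu mu0.
have := Hmono z 0 mu (lexx 0) (ltW mu0).
rewrite h0 /=; lra.
Qed.
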